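(* Let $N\ge 2$, $d\ge1$. Let $\bar{\mathscr L}\in\mathbb{R}^{N\times N}$ be a real symmetric matrix with zero row sums whose eigenvalues are $0$ (simple) and $\gamma$ with multiplicity $N-1$. Let $\mathscr B\in\mathbb{R}^{N\times N}$ be symmetric with all row sums equal to $e$. Let $\epsilon,\lambda,d^{[1]}\in\mathbb{R}$, let $t\mapsto \mathbf x_s(t),\mathbf y_s(t)\in\mathbb{R}^d$ be given, and let $F_1,F_2:\mathbb{R}^d\to\mathbb{R}^d$, $G^{[1]},G^{[2]},H_1,H_2:\mathbb{R}^d\times\mathbb{R}^d\to\mathbb{R}^d$ be continuously differentiable. Write $J$ (resp. $D$) for the Jacobian with respect to the first (resp. second) argument, all evaluated along $(\mathbf x_s,\mathbf x_s)$, $(\mathbf y_s,\mathbf y_s)$, $(\mathbf x_s,\mathbf y_s)$ or $(\mathbf y_s,\mathbf x_s)$ as appropriate. Consider the linear system for $\delta\bar{\mathbf x},\delta\bar{\mathbf y}\in\mathbb{R}^{Nd}$: $$\delta\dot{\bar{\mathbf x}}=\big[I_N\otimes\big(JF_1(\mathbf x_s)+\epsilon d^{[1]}(JG^{[1]}(\mathbf x_s,\mathbf x_s)+DG^{[1]}(\mathbf x_s,\mathbf x_s))+\lambda e\,JH_1(\mathbf x_s,\mathbf y_s)\big)-\epsilon\,\bar{\mathscr L}\otimes DG^{[1]}(\mathbf x_s,\mathbf x_s)\big]\delta\bar{\mathbf x}+\lambda\,(\mathscr B\otimes DH_1(\mathbf x_s,\mathbf y_s))\,\delta\bar{\mathbf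 y},$$ $$\delta\dot{\bar{\mathbf y}}=\big[I_N\otimes\big(JF_2(\mathbf y_s)+\epsilon d^{[1]}(JG^{[2]}(\mathbf y_s,\mathbf y_s)+DG^{[2]}(\mathbf y_s,\mathbf y_s))+\lambda e\,JH_2(\mathbf y_s,\mathbf x_s)\big)-\epsilon\,\bar{\mathscr L}\otimes DG^{[2]}(\mathbf y_s,\mathbf y_s)\big]\delta\bar{\mathbf y}+\lambda\,(\mathscr B\otimes DH_2(\mathbf y_s,\mathbf x_s))\,\delta\bar{\mathbf x}.$$ Let $e,\Gamma_2,\dots,\Gamma_N$ be the eigenvalues of $\mathscr B$, where $e$ corresponds to the eigenvector $\mathbf 1=(1,\dots,1)^{tr}$. Then there is an orthogonal matrix $V\in\mathbb{R}^{N\times N}$ with first column $\mathbf 1/\sqrt N$ such that, writing $\eta^{(\bar{\mathbf x})}=(V\otimes I_d)^{tr}\delta\bar{\mathbf x}$ and $\eta^{(\bar{\mathbf y})}=(V\otimes I_d)^{tr}\delta\bar{\mathbf y}$ with $d$-dimensional blocks $\eta^{(\bar{\mathbf x})}_{i},\eta^{(\bar{\mathbf y})}_{i}$, $i=1,\dots,N$, each pair $(\eta^{(\bar{\mathbf x})}_{i},\eta^{(\bar{\mathbf y})}_{i})$ for $i=2,\dots,N$ satisfies the closed $2d$-dimensional system $$\dot\eta^{(\bar{\mathbf x})}_{i}=\big[JF_1(\mathbf x_s)+\epsilon d^{[1]}(JG^{[1]}+DG^{[1]})(\mathbf x_s,\mathbf x_s)-\epsilon\gamma\,DG^{[1]}(\mathbf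 x_s,\mathbf x_s)+\lambda e\,JH_1(\mathbf x_s,\mathbf y_s)\big]\eta^{(\bar{\mathbf x})}_{i}+\lambda\Gamma_i\,DH_1(\mathbf x_s,\mathbf y_s)\eta^{(\bar{\mathbf y})}_{i},$$ $$\dot\eta^{(\bar{\mathbf y})}_{i}=\big[JF_2(\mathbf y_s)+\epsilon d^{[1]}(JG^{[2]}+DG^{[2]})(\mathbf y_s,\mathbf y_s)-\epsilon\gamma\,DG^{[2]}(\mathbf y_s,\mathbf y_s)+\lambda e\,JH_2(\mathbf y_s,\mathbf x_s)\big]\eta^{(\bar{\mathbf y})}_{i}+\lambda\Gamma_i\,DH_2(\mathbf y_s,\mathbf x_s)\eta^{(\bar{\mathbf x})}_{i},$$ i.e. the $2d(N-1)$-dimensional transverse error system decouples into $N-1$ independent $2d$-dimensional linear systems.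
   Context: This is the linearization, about an intralayer synchronous solution $(\mathbf x_s,\mathbf y_s)$, of a two-layer network with a single intralayer connection type (tier), with time-averaged intralayer Laplacian $\bar{\mathscr L}$ (identical in both layers), common interlayer adjacency $\mathscr B^{[1]}=\mathscr B^{[2]}=\mathscr B$ with constant interlayer degree $e$, constant intralayer degree $d^{[1]}$, intralayer coupling strength $\epsilon$ and interlayer coupling strength $\lambda$. The pair $(\eta^{(\bar{\mathbf x})}_1,\eta^{(\bar{\mathbf y})}_1)$ describes the mode parallel to the synchronization manifold, and the pairs with $i\ge2$ the transverse modes. *)

(* Defs.v *)
From HB Require Import structures.
From mathcomp Require Import all_boot all_order all_algebra.
From mathcomp Require Import mxtens.
From mathcomp Require Import all_classical all_reals all_analysis.
Set Implicit Arguments. Unset Strict Implicit. Unset Printing Implicit Defensive.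
Import Order.TTheory GRing.Theory Num.Theory.
Import numFieldNormedType.Exports.
Local Open Scope ring_scope.

(* Kronecker product: [tensmx A B] (notation A *t B) from mathcomp real_closed
   mxtens; row/column index (i,k) of A *t B is [mxtens_index (i,k)] = i*p + k,
   i.e. the usual block ordering of the Kronecker product. *)

(* The library's [jacobian f p] acts on row vectors (u *m 'J f p = df_p(u)),
   so the usual Jacobian is its transpose. *)
Definition Jc (R : realType) n m (f : 'rV[R]_n -> 'rV[R]_m) (p : 'rV[R]_n)
  : 'M[R]_(m, n) := (jacobian f p)^T.

(* partial Jacobians of G : R^d x R^d -> R^d w.r.t. first (J) and second (D)
   argument, at (u, v) *)
Definition J1 (R : realType) d (G : 'rV[R]_d -> 'rV[R]_d -> 'rV[R]_d) u v :=
  Jc (fun w => G w v) u.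
Definition J2 (R : realType) d (G : 'rV[R]_d -> 'rV[R]_d -> 'rV[R]_d) u v :=
  Jc (G u) v.

Definition C1 (R : realType) n m (f : 'rV[R]_n -> 'rV[R]_m) : Prop :=
  (forall p, differentiable f p) /\ continuous (fun p => jacobian f p).

Definition C1_2 (R : realType) d (G : 'rV[R]_d -> 'rV[R]_d -> 'rV[R]_d) : Prop :=
  C1 (fun z : 'rV[R]_(d + d) => G (lsubmx z) (rsubmx z)).

Definition blk (R : realType) N d (i : 'I_N) (v : 'cV[R]_(N * d)) : 'cV[R]_d :=
  \col_(k < d) v (mxtens_index (i, k)) 0.

(* Main.v *)
Require Import Defs.
From HB Require Import structures.
From mathcomp Require Import all_boot all_order all_algebra.
From mathcomp Require Import mxtens.
From mathcomp Require Import all_classical all_reals all_analysis.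
From mathcomp Require Import ring lra.
Import Order.TTheory GRing.Theory Num.Theory.
Import numFieldNormedType.Exports.
Local Open Scope ring_scope.

Section Helpers.
Variable R : realType.
Local Open Scope classical_set_scope.

Lemma mx_cvg_entry (T : Type) (F : set_system T) (FF : Filter F) m n
  (f : T -> 'M[R]_(m,n)) (l : 'M[R]_(m,n)) :
  (forall i j, (fun x => f x i j) @ F --> l i j) -> f @ F --> l.
Proof.
move=> H; apply/cvg_mx_entourageP => A entA.
apply: filter_forall => i; apply: filter_forall => j.
have /cvg_entourageP := H i j.
move=> /(_ _ entA) h.
near=> x. apply/mem_set. near: x. exact: h.
Unshelve. all: by end_near.
Qed.

Lemma cvg_sum_fun (T : Type) (F : set_system T) (FF : Filter F) k
  (g : 'I_k -> T -> R) (l : 'I_k -> R) :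
  (forall j, g j @ F --> l j) -> (fun x => \sum_j g j x) @ F --> \sum_j l j.
Proof.
elim: k g l => [|k IH] g l H.
  under eq_fun do rewrite big_ord0. rewrite big_ord0. exact: cvg_cst.
under eq_fun do rewrite big_ord_recr. rewrite big_ord_recr.
apply: cvgD; last exact: H.
exact: (IH (fun j => g (widen_ord _ j)) (fun j => l (widen_ord _ j))).
Qed.

Lemma mulmx_continuous m n p (P : 'M[R]_(m,n)) :
  continuous (fun w : 'M[R]_(n,p) => P *m w).
Proof.
move=> w; apply: (@mx_cvg_entry _ (nbhs w) (nbhs_filter w)) => i j.
under eq_fun do rewrite mxE. rewrite mxE.
apply: cvg_sum_fun => k.
apply: cvgMl_tmp. exact: coord_continuous.
Qed.

Lemma is_derive_mulmx m n (P : 'M[R]_(m,n)) (g : R -> 'cV[R]_n) t dg :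
  is_derive t (1:R) g dg -> is_derive t (1:R) (fun s => P *m g s) (P *m dg).
Proof.
case=> dgx <-.
have key : (fun h : R => h^-1 *: (((fun s => P *m g s) \o shift t) (h *: (1:R)) - P *m g t))
  = (fun w => P *m w) \o (fun h : R => h^-1 *: ((g \o shift t) (h *: (1:R)) - g t)).
  by apply/funext => h /=; rewrite -mulmxBr scalemxAr.
have cv : (fun h : R => h^-1 *: ((g \o shift t) (h *: (1:R)) - g t)) @ 0^' --> 'D_1 g t := dgx.
have H := continuous_cvg _ (@mulmx_continuous _ _ 1 P (derive g t 1)) cv.
rewrite -key in H.
split; first by apply/cvg_ex; eexists; exact: H.
apply: cvg_lim => //. apply: H. Qed.
End Helpers.

Section LA.
Variable R : rcfType.
Local Notation e0 := (delta_mx 0 0).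

Lemma dotE n (x y : 'cV[R]_n) : (x^T *m y) 0 0 = \sum_k x k 0 * y k 0.
Proof. by rewrite mxE; apply: eq_bigr => k _; rewrite mxE. Qed.

Lemma dot_ge0 n (x : 'cV[R]_n) : 0 <= (x^T *m x) 0 0.
Proof. by rewrite dotE; apply: sumr_ge0 => k _; rewrite -expr2 sqr_ge0. Qed.

Lemma dot_eq0 n (x : 'cV[R]_n) : (x^T *m x) 0 0 = 0 -> x = 0.
Proof.
rewrite dotE => /psumr_eq0P H.
apply/matrixP => i j; rewrite [j]ord1 mxE.
have /eqP := H (fun k _ => ltac:(by rewrite -expr2 sqr_ge0)) i isT; rewrite -expr2 sqrf_eq0 => /eqP //.
Qed.

Lemma tr_e0_mul n (x : 'cV[R]_n.+1) : e0^T *m x = (x 0 0)%:M.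
Proof. by rewrite trmx_delta -rowE [LHS]mx11_scalar mxE. Qed.

Lemma householder n (u : 'cV[R]_n.+1) : u^T *m u = 1%:M ->
  exists H : 'M[R]_n.+1, H^T *m H = 1%:M /\ H *m e0 = u.
Proof.
move=> uu.
set w := e0 - u.
have [w0|wn0] := eqVneq w 0.
  exists 1%:M; rewrite trmx1 mulmx1 mul1mx; split => //.
  by move/eqP: w0; rewrite subr_eq0 => /eqP.
set s := (w^T *m w) 0 0.
have s0 : s != 0 by apply: contra_neq wn0 => /dot_eq0.
have ww : w^T *m w = s%:M by rewrite [LHS]mx11_scalar.
have wu0 : w^T *m e0 = (w 0 0)%:M.
  by rewrite -[w^T *m e0]trmxK trmx_mul trmxK tr_e0_mul tr_scalar_mx.
have wT : w^T = e0^T - u^T by rewrite /w linearB.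
have s2 : s = 2 * w 0 0.
  rewrite /s {2}/w mulmxBr wu0 wT mulmxBl tr_e0_mul uu !mxE /w.

  by rewrite !eqxx /= mulr1n; ring.
have w00 : w 0 0 != 0 by apply: contra_neq s0 => h; rewrite s2 h mulr0.
set c := 2 / s.
set M := w *m w^T.
have MM : M *m M = s *: M.
  by rewrite /M mulmxA -(mulmxA w) ww mul_mx_scalar scalemxAl.
have cc : c * c * s = c + c.
  by rewrite /c; field.
exists (1%:M - c *: M); split.
  have -> : (1%:M - c *: M)^T = 1%:M - c *: M.
    by rewrite linearB /= linearZ /= trmx1 /M trmx_mul trmxK.
  rewrite mulmxBl mul1mx mulmxBr mulmx1 -!scalemxAl -!scalemxAr MM !scalerA cc.

  rewrite scalerDl; move: (c *: M) => x.
  have -> : x - (x + x) = - x by rewrite opprD addrA subrr add0r.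
  by rewrite opprK subrK.
rewrite mulmxBl mul1mx -scalemxAl /M -mulmxA wu0 mul_mx_scalar scalerA.
have -> : c * w 0 0 = 1 by rewrite /c s2; field.
by rewrite scale1r /w opprB addrC subrK.
Qed.


Lemma char_poly_orth n (W A : 'M[R]_n) : W^T *m W = 1%:M ->
  char_poly (W^T *m A *m W) = char_poly A.
Proof.
move=> WW.
rewrite /char_poly /char_poly_mx.
have -> : 'X%:M - map_mx polyC (W^T *m A *m W) =
  map_mx polyC W^T *m ('X%:M - map_mx polyC A) *m map_mx polyC W.
  rewrite mulmxBr mulmxBl mul_mx_scalar -scalemxAl -map_mxM WW map_mx1 scalemx1.
  by rewrite !map_mxM.
by rewrite !det_mulmx mulrAC -det_mulmx -map_mxM WW map_mx1 det1 mul1r.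
Qed.

Lemma char_poly_block n (a : R) (A : 'M[R]_n) :
  char_poly (block_mx (a%:M : 'M[R]_1) 0 0 A) = ('X - a%:P) * char_poly A.
Proof.
by rewrite /char_poly char_block_diag_mx det_ublock det_mx11 !mxE !eqxx /= !mulr1n.
Qed.

Lemma e0_col n : (delta_mx 0 0 : 'cV[R]_n.+1) = col_mx (1%:M : 'M[R]_1) (0 : 'cV[R]_n).
Proof.
apply/matrixP => i j; rewrite [j]ord1 !mxE.
case: splitP => k hk; rewrite !mxE.
  move: hk; rewrite [k]ord1 => hk.
  by have -> : i = 0 by apply: val_inj.
have -> : (i == 0) = false.
  by apply/negbTE/eqP => h; move: hk; rewrite h.
by [].
Qed.

Lemma spectral n (A : 'M[R]_n.+1) (c : 'I_n.+1 -> R) (u : 'cV[R]_n.+1) :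
  A^T = A -> char_poly A = \prod_i ('X - (c i)%:P) -> u^T *m u = 1%:M ->
  A *m u = c 0 *: u ->
  exists V : 'M[R]_n.+1,
    [/\ V^T *m V = 1%:M, V *m e0 = u & V^T *m A *m V = diag_mx (\row_i c i)].
Proof.
elim: n A c u => [|n IH] A c u AT cpA uu Au.
  exists u; split => //.
    have -> : (e0 : 'M[R]_1) = 1%:M by apply/matrixP => i j; rewrite [i]ord1 [j]ord1 !mxE.
    by rewrite mulmx1.
  rewrite -mulmxA Au -scalemxAr uu scalemx1.
  by apply/matrixP => i j; rewrite [i]ord1 [j]ord1 !mxE.
have [H [HH He0]] := @householder _ u uu.
have HH' := mulmx1C HH.
have HTu : H^T *m u = e0 by rewrite -He0 mulmxA HH mul1mx.
set M := H^T *m A *m H.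
have Mdef : M = H^T *m A *m H by [].
clearbody M.
have MT : M^T = M by rewrite Mdef !trmx_mul trmxK AT mulmxA.
have Me0 : M *m (e0 : 'cV[R]_n.+2) = c 0 *: (e0 : 'cV[R]_n.+2).
  by rewrite Mdef -mulmxA He0 -mulmxA Au -scalemxAr HTu.
have cpM : char_poly M = char_poly A by rewrite Mdef; apply: char_poly_orth.
have Mi0 : forall i, M i 0 = c 0 * (i == 0)%:R.
  move=> i; have := congr1 (fun X : 'cV[R]_n.+2 => X i 0) Me0.
  by rewrite /= -colE !mxE andbT.
set A' := drsubmx (M : 'M[R]_(1 + n.+1)).
have l0 : lshift n.+1 (0 : 'I_1) = 0 :> 'I_n.+2 by apply: val_inj.
have dl0 : dlsubmx (M : 'M[R]_(1 + n.+1)) = 0.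
  apply/matrixP => i j; rewrite [j]ord1 !mxE l0 Mi0.
  by have -> : (rshift 1 i == 0) = false by []; rewrite mulr0.
have ul : ulsubmx (M : 'M[R]_(1 + n.+1)) = (c 0)%:M.
  by apply/matrixP => i j; rewrite [i]ord1 [j]ord1 !mxE l0 Mi0 eqxx /= mulr1.
have ur : ursubmx (M : 'M[R]_(1 + n.+1)) = 0.
  by rewrite -[ursubmx _]trmxK trmx_ursub MT dl0 trmx0.
have Mblk : M = block_mx ((c 0)%:M : 'M[R]_1) 0 0 A'.
  by rewrite -[M](@submxK _ 1 n.+1 1 n.+1) ul ur dl0.
have A'T : A'^T = A' by rewrite /A' trmx_drsub MT.
have cpA' : char_poly A' = \prod_(i < n.+1) ('X - (c (lift 0 i))%:P).
  have cpA2 : char_poly A = ('X - (c 0)%:P) * \prod_(i < n.+1) ('X - (c (lift 0 i))%:P).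
    by rewrite cpA [LHS]big_ord_recl.
  move: cpM; rewrite cpA2 Mblk char_poly_block.
  by apply: mulfI; rewrite polyXsubC_eq0.
set a := c (lift 0 0).
have : eigenvalue A' a by rewrite eigenvalue_root_char cpA' big_ord_recl rootM root_XsubC eqxx.
case/eigenvalueP => v vA vn0.
set z := v^T.
have Az : A' *m z = a *: z by rewrite -{1}A'T -trmx_mul vA linearZ.
set s := (z^T *m z) 0 0.
have s_ge0 : 0 <= s := @dot_ge0 _ z.
have s_ne0 : s != 0.
  apply: contra_neq vn0 => /dot_eq0 z0; by rewrite -[v]trmxK -/z z0 trmx0.
set u' := (Num.sqrt s)^-1 *: z.
have u'u' : u'^T *m u' = 1%:M.
  rewrite /u' linearZ /= [(_ *: z)^T]linearZ /= -scalemxAl scalerA [z^T *m z]mx11_scalar -/s.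
  rewrite scale_scalar_mx -invfM -expr2 sqr_sqrtr // mulVf //.
have Au' : A' *m u' = a *: u' by rewrite /u' -scalemxAr Az !scalerA mulrC.
have [V' [V'V' V'e0 V'd]] := IH A' (fun i => c (lift 0 i)) u' A'T cpA' u'u' Au'.
exists (H *m block_mx (1%:M : 'M[R]_1) 0 0 V'); split.
- rewrite trmx_mul mulmxA -(mulmxA _ H^T) HH mulmx1 (@tr_block_mx _ 1 n.+1 1 n.+1) !trmx0 trmx1 (@mulmx_block _ 1 n.+1 1 n.+1 1 n.+1).
  rewrite !(mulmx0, mul0mx, mulmx1, mul1mx, addr0, add0r) V'V'.
  by rewrite -scalar_mx_block.
- rewrite -mulmxA e0_col (@mul_block_col _ 1 n.+1 1 n.+1 1) !(mulmx0, mul0mx, mulmx1, mul1mx, addr0, add0r).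
  by rewrite -e0_col.
- have -> : (H *m block_mx (1%:M : 'M[R]_1) 0 0 V')^T *m A *m (H *m block_mx (1%:M : 'M[R]_1) 0 0 V')
     = (block_mx (1%:M : 'M[R]_1) 0 0 V')^T *m M *m block_mx (1%:M : 'M[R]_1) 0 0 V'.
    by rewrite Mdef trmx_mul !mulmxA.
  rewrite Mblk (@tr_block_mx _ 1 n.+1 1 n.+1) !trmx0 trmx1 !(@mulmx_block _ 1 n.+1 1 n.+1 1 n.+1).
  rewrite !(mulmx0, mul0mx, mulmx1, mul1mx, addr0, add0r) V'd.
  have -> : (\row_i c i : 'rV[R]_(1 + n.+1)) = row_mx (\row_(i < 1) c 0) (\row_i c (lift 0 i)).
    apply/matrixP => i j; rewrite [i]ord1 !mxE; case: splitP => k hk; rewrite !mxE.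
      by congr c; apply: val_inj; rewrite /= hk [k]ord1.
    by congr c; apply: val_inj; rewrite /= hk.
  rewrite (@diag_mx_row _ n.+1 1).
  suff -> : diag_mx (\row_(i < 1) c 0) = (c 0)%:M by [].
  by apply/matrixP => i j; rewrite [i]ord1 [j]ord1 !mxE.
Qed.

End LA.

Section Kron.
Variable R : realType.

Lemma sum_tens N d (F : 'I_(N * d) -> R) :
  \sum_J F J = \sum_(j < N) \sum_(l < d) F (mxtens_index (j, l)).
Proof.
rewrite pair_big /=.
rewrite (reindex (@mxtens_index N d)) /=; last first.
  by exists (@mxtens_unindex N d) => p _; [apply: mxtens_indexK | apply: mxtens_unindexK].
by apply: eq_bigr => -[j l].
Qed.

Lemma blkD N d i (a b : 'cV[R]_(N * d)) : blk i (a + b) = blk i a + blk i b.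
Proof. by apply/matrixP => k z; rewrite !mxE. Qed.

Lemma blkB N d i (a b : 'cV[R]_(N * d)) : blk i (a - b) = blk i a - blk i b.
Proof. by apply/matrixP => k z; rewrite !mxE. Qed.

Lemma blkZ N d i (c : R) (a : 'cV[R]_(N * d)) : blk i (c *: a) = c *: blk i a.
Proof. by apply/matrixP => k z; rewrite !mxE. Qed.

Lemma blkE N d (i : 'I_N) (w : 'cV[R]_(N * d)) :
  blk i w = (\matrix_(k < d, J < N * d) (J == mxtens_index (i, k))%:R) *m w.
Proof.
apply/matrixP => k z; rewrite [z]ord1 !mxE (bigD1 (mxtens_index (i, k))) //=.
rewrite mxE eqxx mul1r big1 ?addr0 // => J /negbTE hJ.
by rewrite mxE hJ mul0r.
Qed.

Lemma blk_tens N d (D : 'M[R]_N) (Y : 'M[R]_d) (w : 'cV[R]_(N * d)) i :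
  (forall j, j != i -> D i j = 0) ->
  blk i ((D *t Y) *m w) = D i i *: (Y *m blk i w).
Proof.
move=> Dij; apply/matrixP => k z; rewrite [z]ord1 !mxE sum_tens.
rewrite (bigD1 i) //= [X in _ + X]big1 ?addr0; last first.
  move=> j /= ji; apply: big1 => l _.
  by rewrite tensmxE (Dij j ji) !mul0r.
rewrite mulr_sumr; apply: eq_bigr => l _.
by rewrite tensmxE !mxE mulrA.
Qed.

Lemma tens_conj N d (V X : 'M[R]_N) (Y : 'M[R]_d) : V *m V^T = 1%:M ->
  (V *t (1%:M : 'M[R]_d))^T *m (X *t Y) = ((V^T *m X *m V) *t Y) *m (V *t (1%:M : 'M[R]_d))^T.
Proof.
move=> VV; rewrite trmx_tens trmx1 !tensmx_mul mulmx1 mul1mx.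
by rewrite -[V^T *m X *m V *m V^T]mulmxA VV mulmx1.
Qed.

Lemma step N d (V L B : 'M[R]_N) (A Dg Dh : 'M[R]_d) (eps lam g G : R) (i : 'I_N)
  (x y : 'cV[R]_(N * d)) :
  V *m V^T = 1%:M -> V^T *m V = 1%:M ->
  (forall j, j != i -> (V^T *m L *m V) i j = 0) -> (V^T *m L *m V) i i = g ->
  (forall j, j != i -> (V^T *m B *m V) i j = 0) -> (V^T *m B *m V) i i = G ->
  blk i ((V *t (1%:M : 'M[R]_d))^T *m
     ((((1%:M : 'M[R]_N) *t A) - eps *: (L *t Dg)) *m x + lam *: (B *t Dh) *m y))
  = (A - (eps * g) *: Dg) *m blk i ((V *t (1%:M : 'M[R]_d))^T *m x)
    + (lam * G) *: (Dh *m blk i ((V *t (1%:M : 'M[R]_d))^T *m y)).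
Proof.
move=> VV VV' Li Lii Bi Bii.
rewrite mulmxDr !mulmxA mulmxBr -!scalemxAr !tens_conj // mulmx1 VV'.
rewrite mulmxBl -!scalemxAl -!mulmxA blkD blkB !blkZ.
rewrite !blk_tens => [|j ji|j ji|j].
- by rewrite !mulmxA Lii Bii mxE eqxx scale1r mulmxBl -scalemxAl !scalerA.
- by rewrite mulmxA Bi.
- by rewrite mulmxA Li.
- by rewrite mxE eq_sym => /negbTE ->.
Qed.


End Kron.

Theorem mainTheorem2 (R : realType) (N d : nat) (hN : (2 <= N)%N) (hd : (0 < d)%N)
  (L B : 'M[R]_N) (gamma e : R) (Gam : 'I_N -> R)
  (eps lam d1 : R) (xs ys : R -> 'rV[R]_d)
  (F1 F2 : 'rV[R]_d -> 'rV[R]_d)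
  (G1 G2 H1 H2 : 'rV[R]_d -> 'rV[R]_d -> 'rV[R]_d) :
  (* intralayer Laplacian *)
  L^T = L ->
  (forall i, \sum_(j < N) L i j = 0) ->
  gamma != 0 ->
  char_poly L = 'X * ('X - gamma%:P) ^+ (N - 1) ->
  (* interlayer adjacency *)
  B^T = B ->
  (forall i, \sum_(j < N) B i j = e) ->
  char_poly B = \prod_(i < N) ('X - (Gam i)%:P) ->
  (forall i : 'I_N, nat_of_ord i = 0%N -> Gam i = e) ->
  (* regularity *)
  C1 F1 -> C1 F2 -> C1_2 G1 -> C1_2 G2 -> C1_2 H1 -> C1_2 H2 ->
  exists V : 'M[R]_N,
    V^T *m V = 1%:M /\
    (forall k j : 'I_N, nat_of_ord j = 0%N -> V k j = (Num.sqrt (N%:R))^-1) /\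
    forall dx dy : R -> 'cV[R]_(N * d),
      (forall t, is_derive (t : R) (1 : R) dx
         (((1%:M : 'M[R]_N) *t
             (Jc F1 (xs t)
              + (eps * d1) *: (J1 G1 (xs t) (xs t) + J2 G1 (xs t) (xs t))
              + (lam * e) *: J1 H1 (xs t) (ys t))
           - eps *: (L *t J2 G1 (xs t) (xs t))) *m dx t
          + lam *: (B *t J2 H1 (xs t) (ys t)) *m dy t)) ->
      (forall t, is_derive (t : R) (1 : R) dy
         (((1%:M : 'M[R]_N) *t
             (Jc F2 (ys t)
              + (eps * d1) *: (J1 G2 (ys t) (ys t) + J2 G2 (ys t) (ys t))
              + (lam * e) *: J1 H2 (ys t) (xs t))
           - eps *: (L *t J2 G2 (ys t) (ys t))) *m dy t
          + lam *: (B *t J2 H2 (ys t) (xs t)) *m dx t)) ->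
      forall i : 'I_N, (0 < i)%N ->
        let etax := fun t => blk i ((V *t (1%:M : 'M[R]_d))^T *m dx t) in
        let etay := fun t => blk i ((V *t (1%:M : 'M[R]_d))^T *m dy t) in
        forall t,
          is_derive (t : R) (1 : R) etax
            ((Jc F1 (xs t)
              + (eps * d1) *: (J1 G1 (xs t) (xs t) + J2 G1 (xs t) (xs t))
              - (eps * gamma) *: J2 G1 (xs t) (xs t)
              + (lam * e) *: J1 H1 (xs t) (ys t)) *m etax t
             + (lam * Gam i) *: (J2 H1 (xs t) (ys t) *m etay t))
          /\
          is_derive (t : R) (1 : R) etay
            ((Jc F2 (ys t)
              + (eps * d1) *: (J1 G2 (ys t) (ys t) + J2 G2 (ys t) (ys t))
              - (eps * gamma) *: J2 G2 (ys t) (ys t)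
              + (lam * e) *: J1 H2 (ys t) (xs t)) *m etay t
             + (lam * Gam i) *: (J2 H2 (ys t) (xs t) *m etax t)).
Proof.
Proof.
destruct N as [|n]; first by [].
move=> LT Lsum g0 cpL BT Bsum cpB Gam0 _ _ _ _ _ _.
set k := (Num.sqrt ((n.+1)%:R : R))^-1.
set u : 'cV[R]_n.+1 := const_mx k.
have Npos : (0 : R) < (n.+1)%:R by rewrite ltr0n.
have Nsq : Num.sqrt ((n.+1)%:R : R) ^+ 2 = (n.+1)%:R by rewrite sqr_sqrtr // ltW.
have Nsq0 : Num.sqrt ((n.+1)%:R : R) != 0 by rewrite sqrtr_eq0 -ltNge.
have uu : u^T *m u = 1%:M.
  apply/matrixP => i j; rewrite [i]ord1 [j]ord1 !mxE.
  under eq_bigr do rewrite !mxE.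
  by rewrite sumr_const card_ord -mulr_natr /k -invfM -expr2 Nsq mulVf // gt_eqF.
have Lu : L *m u = (fun i : 'I_n.+1 => if i == 0 then 0 else gamma) 0 *: u.
  rewrite /= ?eqxx scale0r; apply/matrixP => i j; rewrite !mxE.
  under eq_bigr do rewrite mxE.
  by rewrite -mulr_suml Lsum mul0r.
have cpL' : char_poly L = \prod_i ('X - ((fun i : 'I_n.+1 => if i == 0 then 0 else gamma) i)%:P).
  rewrite cpL big_ord_recl /= ?eqxx polyC0 subr0 subn1 /=; congr (_ * _).
  by rewrite prodr_const card_ord.
have [U [UU Ue0 Ud]] := @spectral _ _ L _ u LT cpL' uu Lu.
have UU' := mulmx1C UU.
have EE : forall m, (delta_mx 0 0 : 'cV[R]_(m.+1)) *m ((delta_mx 0 0 : 'cV[R]_(m.+1))^T)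
    = (delta_mx 0 0 : 'M[R]_(m.+1)).
  by move=> m; rewrite trmx_delta mul_delta_mx.
have Lform : L = gamma *: (1%:M - u *m u^T).
  have -> : L = U *m (U^T *m L *m U) *m U^T.
    by rewrite !mulmxA UU' mul1mx -mulmxA UU' mulmx1.
  rewrite Ud.
  have -> : diag_mx (\row_i (fun i : 'I_n.+1 => if i == 0 then 0 else gamma) i)
      = gamma *: (1%:M - delta_mx 0 0).
    apply/matrixP => i j; rewrite !mxE.
    case: (eqVneq i 0) => [->|i0]; case: (eqVneq i j) => [<-|ij] /=.
    - by rewrite mul0rn eq_sym subrr mulr0.
    - by rewrite mul0rn eq_sym subrr mulr0.
    - by rewrite mulr1n subr0 mulr1.
    - by rewrite mulr0n subrr mulr0.
  rewrite -scalemxAr -scalemxAl mulmxBr mulmxBl mulmx1 UU'.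
  by rewrite -(EE n) mulmxA Ue0 -mulmxA -trmx_mul Ue0.
have Bu : B *m u = Gam 0 *: u.
  rewrite (Gam0 0 erefl); apply/matrixP => i j; rewrite !mxE.
  under eq_bigr do rewrite mxE.
  by rewrite -mulr_suml Bsum.
have [V [VV Ve0 Vd]] := @spectral _ _ B _ u BT cpB uu Bu.
have VV' := mulmx1C VV.
have VTu : V^T *m u = delta_mx 0 0 by rewrite -Ve0 mulmxA VV mul1mx.
have Dl : V^T *m L *m V = gamma *: (1%:M - delta_mx 0 0).
  rewrite Lform -scalemxAr -scalemxAl mulmxBr mulmxBl mulmx1 VV.
  rewrite -(EE n) mulmxA -[V^T *m u *m u^T *m V]mulmxA (_ : u^T *m V = (V^T *m u)^T) ?VTu //.
  by rewrite -VTu trmx_mul trmxK.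
exists V; split => //; split.
  move=> k0 j hj; have -> : j = 0 by apply: val_inj.
  have := congr1 (fun X : 'cV[R]_n.+1 => X k0 0) Ve0.
  by rewrite /= -colE !mxE.
move=> dx dy Hdx Hdy i hi etax etay t.
have i0 : (i == 0) = false by apply/negbTE; rewrite -val_eqE /= -lt0n.
have Li : forall j, j != i -> (V^T *m L *m V) i j = 0.
  by move=> j ji; rewrite Dl !mxE eq_sym (negbTE ji) i0 /= subrr mulr0.
have Lii : (V^T *m L *m V) i i = gamma.
  by rewrite Dl !mxE eqxx i0 /= mulr1n subr0 mulr1.
have Bi : forall j, j != i -> (V^T *m B *m V) i j = 0.
  by move=> j ji; rewrite Vd !mxE eq_sym (negbTE ji) mulr0n.
have Bii : (V^T *m B *m V) i i = Gam i.
  by rewrite Vd !mxE eqxx mulr1n.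
set Pm := (\matrix_(k < d, J < n.+1 * d) (J == mxtens_index (i, k))%:R) *m
            (V *t (1%:M : 'M[R]_d))^T.
have PmE : forall w, Pm *m w = blk i ((V *t (1%:M : 'M[R]_d))^T *m w).
  by move=> w; rewrite blkE /Pm mulmxA.
have ex : etax = fun s => Pm *m dx s.
  by apply/funext => s; rewrite /etax blkE /Pm mulmxA.
have ey : etay = fun s => Pm *m dy s.
  by apply/funext => s; rewrite /etay blkE /Pm mulmxA.
split.
- rewrite ex; apply: is_derive_eq (@is_derive_mulmx _ _ _ Pm _ _ _ (Hdx t)) _.
  rewrite !PmE (@step _ _ _ V L B _ _ _ _ _ _ _ i _ _ VV' VV Li Lii Bi Bii).
  by congr (_ *m _ + _); rewrite [LHS]addrAC.
- rewrite ey; apply: is_derive_eq (@is_derive_mulmx _ _ _ Pm _ _ _ (Hdy t)) _.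
  rewrite !PmE (@step _ _ _ V L B _ _ _ _ _ _ _ i _ _ VV' VV Li Lii Bi Bii).
  by congr (_ *m _ + _); rewrite [LHS]addrAC.
Qed.
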